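(* Let $M := \langle X \mid R\rangle$ where $X$ is finite, and suppose that $M$ is normalizing, cancellative, and BF. Then $M$ has accepted elasticity.
   Context: For a set $X$, $\langle X\rangle$ is the free monoid on $X$ (identity $1$); $M=\langle X\mid R\rangle$ is the monoid presented by generators $X$ and relations $R\subseteq\langle X\rangle\times\langle X\rangle$. $|a|$ is word length; $a=_M b$ means equal images in $M$. $M$ is normalizing if $aM=Ma$ for all $a\in M$; cancellative if $ab=ac$ or $ba=ca$ implies $b=c$. $\mathsf{L}_M(a):=\{|b| : b\in\langle X\rangle,\ b=_M a\}$, $\mathcal{L}(M):=\{\mathsf{L}_M(a): a\in\langle X\rangle\}$; $M$ is BF if every $\mathsf{L}_M(a)$ is finite. For $L\subseteq\mathbb{N}$, $\rho(L):=\sup(L\cap\mathbb{N}^+)/\min(L\cap\mathbb{N}^+)$ if $L\cap\mathbb{N}^+\ne\emptyset$, and $\rho(L):=0$ otherwise; $\rho(M):=\sup\{\rho(L): L\in\mathcal{L}(M)\}$. $M$ has accepted elasticity if $\rho(M)=\rho(L)<\infty$ for some $L\in\mathcal{L}(M)$. *)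

(* Defs.v *)
From HB Require Import structures.
From mathcomp Require Import all_boot all_order all_algebra.
From mathcomp Require Import boolp classical_sets cardinality reals constructive_ereal ereal.
From mathcomp Require Import Rstruct.
Set Implicit Arguments. Unset Strict Implicit. Unset Printing Implicit Defensive.
Import Order.TTheory GRing.Theory Num.Theory.

(* Words over the (finite) alphabet T are elements of the free monoid <X> = seq T,
   with concatenation ++ and identity [::].  A set of relations is a binary
   relation on words (possibly infinite). *)

Inductive presEq (T : Type) (R : seq T -> seq T -> Prop) : seq T -> seq T -> Prop :=
  | presEq_refl a : presEq R a a
  | presEq_sym a b : presEq R a b -> presEq R b a
  | presEq_trans a b c : presEq R a b -> presEq R b c -> presEq R a c
  | presEq_rel u v a b : R a b -> presEq R (u ++ a ++ v) (u ++ b ++ v).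

Definition normalizing (T : Type) (R : seq T -> seq T -> Prop) : Prop :=
  forall a : seq T,
    (forall m, exists m', presEq R (a ++ m) (m' ++ a)) /\
    (forall m, exists m', presEq R (m ++ a) (a ++ m')).

Definition cancellative (T : Type) (R : seq T -> seq T -> Prop) : Prop :=
  forall a b c : seq T,
    (presEq R (a ++ b) (a ++ c) -> presEq R b c) /\
    (presEq R (b ++ a) (c ++ a) -> presEq R b c).

Definition lengthSet (T : Type) (R : seq T -> seq T -> Prop) (a : seq T) : set nat :=
  [set n | exists b : seq T, presEq R b a /\ size b = n].

Definition BF (T : Type) (R : seq T -> seq T -> Prop) : Prop :=
  forall a : seq T, finite_set (lengthSet R a).

Local Open Scope classical_set_scope.
Local Open Scope ring_scope.
Local Open Scope ereal_scope.

(* rho(L) := sup (L ∩ N+) / min (L ∩ N+) if L ∩ N+ <> ∅, and 0 otherwise,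
   valued in the extended reals (the sup may be +oo). The minimum of a nonempty
   set of naturals is its infimum. *)
Definition rho (L : set nat) : \bar Rdefinitions.R :=
  let S := [set (n%:R)%:E | n in [set n | L n /\ (0 < n)%N]] in
  if pselect (exists n, L n /\ (0 < n)%N)
  then ereal_sup S * ((fine (ereal_inf S))^-1)%:E
  else 0.

Definition elasticity (T : Type) (R : seq T -> seq T -> Prop) : \bar Rdefinitions.R :=
  ereal_sup [set rho (lengthSet R a) | a in [set: seq T]].

Definition accepted_elasticity (T : Type) (R : seq T -> seq T -> Prop) : Prop :=
  exists a : seq T, elasticity R = rho (lengthSet R a) /\ elasticity R < +oo.

(* Main.v *)
Require Import Defs.
From mathcomp Require Import all_boot all_order all_algebra.
From mathcomp Require Import boolp classical_sets cardinality reals constructive_ereal ereal.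
From mathcomp Require Import Rstruct.
From mathcomp Require Import zify.
Import Order.TTheory GRing.Theory Num.Theory.
Set Implicit Arguments. Unset Strict Implicit. Unset Printing Implicit Defensive.


Section Higman.
Variable T : eqType.
Variable L : seq T.

Definition hbad (g : nat -> seq T) :=
  (forall i j, i < j -> ~~ subseq (g i) (g j)) /\ (forall n, all (mem L) (g n)).

Definition hext (l : seq (seq T)) : Prop :=
  exists g, hbad g /\ forall i, i < size l -> g i = nth [::] l i.

Lemma hstep_ex l : exists w, hext l ->
  hext (rcons l w) /\ forall w', hext (rcons l w') -> size w <= size w'.
Proof.
have [H|H] := pselect (hext l); last by exists [::].
pose P := fun n => `[< exists w, size w = n /\ hext (rcons l w) >].
have exP : exists n, P n.
  case: H => g [gb ga]; exists (size (g (size l))); apply/asboolP.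
  exists (g (size l)); split => //; exists g; split => // i.
  rewrite size_rcons ltnS leq_eqVlt => /orP[/eqP->|il].
    by rewrite nth_rcons ltnn eqxx.
  by rewrite nth_rcons il ga.
case: (ex_minnP exP) => m /asboolP [w [sw ew]] mmin.
exists w => _; split => // w' ew'; rewrite sw; apply: mmin; apply/asboolP.
by exists w'.
Qed.

Definition hstep l := proj1_sig (cid (hstep_ex l)).

Fixpoint hpre n := if n is n'.+1 then rcons (hpre n') (hstep (hpre n')) else [::].

Lemma size_hpre n : size (hpre n) = n.
Proof. by elim: n => //= n IH; rewrite size_rcons IH. Qed.

Lemma hext_pre n : hext (hpre 0) -> hext (hpre n).
Proof.
move=> H0; elim: n => // n IH /=.
exact: (proj1 (proj2_sig (cid (hstep_ex (hpre n))) IH)).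
Qed.

Lemma nth_hpre m i : i < m -> nth [::] (hpre m) i = hstep (hpre i).
Proof.
elim: m => // m IH; rewrite ltnS leq_eqVlt => /orP[/eqP->|im] /=.
  by rewrite nth_rcons size_hpre ltnn eqxx.
by rewrite nth_rcons size_hpre im IH.
Qed.

Lemma higman_gen (f : nat -> seq T) : (forall n, all (mem L) (f n)) ->
  exists i j, i < j /\ subseq (f i) (f j).
Proof.
move=> fL; apply: contrapT => Hn.
have fb : hbad f.
  split => // i j ij; apply/negP => sij; apply: Hn; by exists i, j.
have H0 : hext (hpre 0) by exists f.
pose F n := hstep (hpre n).
have hF : forall n, exists g, hbad g /\ forall i, i <= n -> g i = F i.
  move=> n; case: (hext_pre n.+1 H0) => g [gb ga]; exists g; split => // i ilt.
  by rewrite ga ?size_hpre ?ltnS // nth_hpre.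
have Fbad : hbad F.
  split.
    move=> i j ij; case: (hF j) => g [[gb _] ga].
    by rewrite -(ga i (ltnW ij)) -(ga j (leqnn j)); exact: gb.
  move=> n; case: (hF n) => g [[_ gL] ga]; by rewrite -(ga n (leqnn n)).
have Fmin : forall n g, hbad g -> (forall i, i < n -> g i = F i) ->
    size (F n) <= size (g n).
  move=> n g gb ga.
  have := proj2 (proj2_sig (cid (hstep_ex (hpre n))) (hext_pre n H0)) (g n).
  apply; exists g; split => // i; rewrite size_rcons size_hpre ltnS.
  rewrite leq_eqVlt => /orP[/eqP->|il].
    by rewrite nth_rcons size_hpre ltnn eqxx.
  by rewrite nth_rcons size_hpre il nth_hpre // ga.
have Fne : forall n, F n != [::].
  move=> n; apply/negP => /eqP e; case: Fbad => Fb _.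
  by move: (Fb n n.+1 (ltnSn n)); rewrite e sub0seq.
(* pigeonhole *)
have [a Ha] : exists a, forall N, exists n, (N <= n) && (ohead (F n) == Some a).
  apply: contrapT => Hno.
  have Hall : forall a, exists N, forall n, N <= n -> ohead (F n) != Some a.
    move=> a; apply: contrapT => Hk; apply: Hno; exists a => N.
    apply: contrapT => Hk2; apply: Hk; exists N => n Nn; apply/negP => /eqP e.
    by apply: Hk2; exists n; rewrite Nn e eqxx.
  have : forall L' : seq T, exists N, forall n, N <= n ->
      forall b, b \in L' -> ohead (F n) != Some b.
    elim => [|b L' [N IH]]; first by exists 0.
    case: (Hall b) => Nb Hb; exists (maxn N Nb) => n.
    rewrite geq_max => /andP[h1 h2] c; rewrite inE => /orP[/eqP->|cL].
      exact: Hb.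
    exact: IH.
  move=> /(_ L) [N HN].
  case: Fbad => _ FL; move: (FL N) (Fne N) (HN N (leqnn N)).
  case: (F N) => // b t /= /andP[bL _] _ /(_ b bL); by rewrite eqxx.
pose nxt N := ex_minn (Ha N).
have nxtP : forall N, (N <= nxt N) && (ohead (F (nxt N)) == Some a).
  move=> N; rewrite /nxt; by case: ex_minnP.
pose phi := fix phi k := if k is k'.+1 then nxt (phi k').+1 else nxt 0.
have phiS : forall k, phi k < phi k.+1.
  by move=> k /=; have /andP[h _] := nxtP (phi k).+1.
have phiM : forall k l, k < l -> phi k < phi l.
  move=> k l; elim: l => // l IH; rewrite ltnS leq_eqVlt => /orP[/eqP->|kl].
    exact: phiS.
  exact: ltn_trans (IH kl) (phiS l).
have phiH : forall k, F (phi k) = a :: behead (F (phi k)).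
  move=> k; have : ohead (F (phi k)) == Some a.
    by case: k => [|k] /=; [have /andP[_ h] := nxtP 0 | have /andP[_ h] := nxtP (phi k).+1].
  by case: (F (phi k)) => //= b t /eqP[->].
have phi0 : forall k, phi 0 <= phi k.
  by case=> // k; apply: ltnW; apply: phiM.
pose g i := if i < phi 0 then F i else behead (F (phi (i - phi 0))).
have gb : hbad g.
  case: Fbad => Fb FL; split; last first.
    move=> n; rewrite /g; case: ifP => // _.
    by move: (FL (phi (n - phi 0))); rewrite phiH /= => /andP[].
  move=> i j ij; rewrite /g.
  case: ifP => ip; case: ifP => jp.
  - exact: Fb.
  - apply/negP => s; move: (Fb i (phi (j - phi 0)) (leq_trans ip (phi0 _))).
    move=> /negP; apply.
    apply: subseq_trans s _; rewrite [X in subseq _ X]phiH; exact: subseq_cons.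
  - move/negbT: ip; rewrite -leqNgt => ip'.
    by have := ltn_trans jp (leq_ltn_trans ip' ij); rewrite ltnn.
  - apply/negP => s.
    have hij : i - phi 0 < j - phi 0 by rewrite ltn_sub2rE // leqNgt ip.
    move: (Fb (phi (i - phi 0)) (phi (j - phi 0)) (phiM _ _ hij)).
    move=> /negP; apply; rewrite (phiH (i - phi 0)) (phiH (j - phi 0)) /=.
    by rewrite eqxx.
have := Fmin (phi 0) g gb.
have -> : g (phi 0) = behead (F (phi 0)) by rewrite /g ltnn subnn.
have ga : forall i, i < phi 0 -> g i = F i by move=> i ip; rewrite /g ip.
move=> /(_ ga); case: (F (phi 0)) (Fne (phi 0)) => // b t _ /=.
by rewrite ltnn.
Qed.
End Higman.

Definition Lw (X : finType) (C : nat) : seq (seq X) :=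
  flatten [seq [seq tval t | t <- enum {: k.-tuple X}] | k <- iota 0 C.+1].
Lemma Lw_mem (X : finType) C (z : seq X) : size z <= C -> z \in Lw X C.
Proof.
move=> hz; apply/flattenP; exists [seq tval t | t <- enum {: (size z).-tuple X}].
  apply: (@map_f _ _ (fun k => [seq tval t | t <- enum {: k.-tuple X}])).
  by rewrite mem_iota add0n ltnS.
by apply/mapP; exists (in_tuple z); rewrite ?mem_enum.
Qed.
Lemma ar a b c d : a * (d+b) < (c+a) * b -> (c+a)*d < c*(d+b).
Proof. nia. Qed.
Lemma gtt a b c d e f : 0 < b -> 0 < d -> 0 < f -> a * d < c * b -> c * f < e * d -> a * f < e * b.
Proof. nia. Qed.

Lemma filter_sub (T : eqType) (p : pred T) s1 s2 :
  subseq s1 s2 -> subseq (seq.filter p s1) (seq.filter p s2).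
Proof.
move=> h; rewrite subseq_filter filter_all /=.
exact: subseq_trans (filter_subseq _ _) h.
Qed.

Lemma enc_fst (T : eqType) (A B : seq T) :
  [seq x.2 | x <- seq.filter (fun x : bool * T => x.1) (map (pair true) A ++ map (pair false) B)] = A.
Proof.
rewrite filter_cat; elim: A => [|a A IH] /=.
  by elim: B.
by rewrite IH.
Qed.

Lemma enc_snd (T : eqType) (A B : seq T) :
  [seq x.2 | x <- seq.filter (fun x : bool * T => ~~ x.1) (map (pair true) A ++ map (pair false) B)] = B.
Proof.
rewrite filter_cat; elim: A => [|a A IH] /=.
  by elim: B => //= b B ->.
by [].
Qed.

Lemma enc_sub (T : eqType) (A1 B1 A2 B2 : seq T) :
  subseq (map (pair true) A1 ++ map (pair false) B1) (map (pair true) A2 ++ map (pair false) B2) ->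
  subseq A1 A2 /\ subseq B1 B2.
Proof.
move=> h; split.
  rewrite -(enc_fst A1 B1) -(enc_fst A2 B2); apply: map_subseq; exact: filter_sub.
rewrite -(enc_snd A1 B1) -(enc_snd A2 B2); apply: map_subseq; exact: filter_sub.
Qed.

Section Mon.
Variable X : finType.
Variable R : seq X -> seq X -> Prop.
Local Notation "a ~ b" := (presEq R a b) (at level 70).

Lemma pe_ctx a b u v : a ~ b -> u ++ a ++ v ~ u ++ b ++ v.
Proof.
elim => {a b} [a|a b _ IH|a b c _ IH1 _ IH2|u0 v0 a b r].
- exact: presEq_refl.
- exact: presEq_sym.
- exact: presEq_trans IH2.
- have E : forall t, u ++ (u0 ++ t ++ v0) ++ v = (u ++ u0) ++ t ++ (v0 ++ v).
    by move=> t; rewrite !catA.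
  by rewrite !E; apply: presEq_rel.
Qed.

Lemma pe_cat a a' b b' : a ~ a' -> b ~ b' -> a ++ b ~ a' ++ b'.
Proof.
move=> ha hb; apply: presEq_trans (_ : a' ++ b ~ _).
  by have := pe_ctx [::] b ha.
by have := pe_ctx a' [::] hb; rewrite !cats0.
Qed.

Lemma bf_bound : BF R -> forall a, exists N, forall b, b ~ a -> size b <= N.
Proof.
move=> bf a; have [F FE] := finite_fsetP.1 (bf a).
exists (\max_(n <- finmap.enum_fset F) n) => b ba.
have : lengthSet R a (size b) by exists b.
rewrite FE /= => hb.
exact: (@leq_bigmax_seq _ _ _ (fun n => n)).
Qed.

Lemma pe_pow w n : w ~ [::] -> flatten (nseq n w) ~ [::].
Proof.
move=> h; elim: n => [|n IH] /=; first exact: presEq_refl.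
by have := pe_cat h IH.
Qed.

Lemma no_units : BF R -> forall w, w ~ [::] -> w = [::].
Proof.
move=> bf w h; have [N HN] := bf_bound bf [::].
case: w h => // x t h; exfalso.
have := HN _ (pe_pow N.+1 h).
rewrite size_flatten /shape map_nseq sumn_nseq /= => hh.
have : N.+1 <= N.+1 * (size t).+1 by rewrite leq_pmulr.
by rewrite mulnC => /leq_trans /(_ hh); rewrite ltnn.
Qed.

Lemma letter_bound : BF R -> exists C, forall (x : X) b, b ~ [:: x] -> size b <= C.
Proof.
move=> bf.
suff : forall l : seq X, exists C, forall x, x \in l -> forall b, b ~ [:: x] -> size b <= C.
  by case/(_ (enum X)) => C HC; exists C => x b; apply: HC; rewrite mem_enum.
elim => [|y l [C IH]]; first by exists 0.
have [N HN] := bf_bound bf [:: y].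
exists (maxn N C) => x; rewrite inE => /orP[/eqP->|xl] b hb.
  by rewrite leq_max HN.
by rewrite leq_max (IH x xl b hb) orbT.
Qed.

Lemma twist_ex : normalizing R -> forall w (x : X), exists z, z ++ w ~ w ++ [:: x].
Proof.
move=> N w x; have [m' h] := (N w).1 [:: x]; exists m'; exact: presEq_sym.
Qed.

Lemma twist_bound : normalizing R -> cancellative R -> BF R ->
  forall C, (forall (x : X) b, b ~ [:: x] -> size b <= C) ->
  forall w x z, z ++ w ~ w ++ [:: x] -> size z <= C.
Proof.
move=> N Cn bf C HC w x z h.
have : exists S, size z <= size S /\ z ++ w ~ w ++ S.
  elim: z {h} => [|t z [S [hs hS]]].
    by exists [::]; rewrite cats0; split => //; exact: presEq_refl.
  have [s hs'] := (N w).2 [:: t].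
  have sne : s != [::].
    apply/negP => /eqP se; move: hs'; rewrite se cats0 => hs''.
    have : [:: t] ~ [::] by apply: (Cn w [:: t] [::]).2; rewrite cat0s.
    by move/(no_units bf).
  exists (s ++ S); split.
    by rewrite /= size_cat -add1n leq_add // lt0n size_eq0.
  rewrite -cat1s -catA; apply: presEq_trans (_ : [:: t] ++ (w ++ S) ~ _).
    exact: pe_cat (presEq_refl R _) hS.
  rewrite catA (catA w s S); exact: pe_cat hs' (presEq_refl R _).
case=> S [hs hS].
have : [:: x] ~ S.
  apply: (Cn w [:: x] S).1; apply: presEq_trans (presEq_sym h) hS.
move/presEq_sym/HC => hSC; exact: leq_trans hs hSC.
Qed.

Definition twist (C : nat) (w : seq X) (x : X) : seq X :=
  match pselect (exists z, size z <= C /\ z ++ w ~ w ++ [:: x]) with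
  | left h => proj1_sig (cid h)
  | right _ => [::]
  end.

Lemma twistP C : (forall w x, exists z, size z <= C /\ z ++ w ~ w ++ [:: x]) ->
  forall w x, size (twist C w x) <= C /\ twist C w x ++ w ~ w ++ [:: x].
Proof.
move=> H w x; rewrite /twist; case: pselect => [h|h]; last by exfalso; apply: h.
exact: proj2_sig (cid h).
Qed.

Fixpoint zsA (C : nat) (w u : seq X) : seq (seq X) :=
  if u is x :: u' then twist C w x :: zsA C (rcons w x) u' else [::].

Lemma size_zsA C w u : size (zsA C w u) = size u.
Proof. by elim: u w => //= x u IH w; rewrite IH. Qed.

Lemma zsA_small C w u : (forall w x, size (twist C w x) <= C) ->
  all (fun z => size z <= C) (zsA C w u).
Proof. by move=> H; elim: u w => //= x u IH w; rewrite H IH. Qed.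

Lemma zs_eq C : (forall w x, twist C w x ++ w ~ w ++ [:: x]) ->
  forall u w, w ++ u ~ flatten (rev (zsA C w u)) ++ w.
Proof.
move=> H; elim => [|x u IH] w /=.
  by rewrite cats0; exact: presEq_refl.
rewrite -cat_rcons; apply: presEq_trans (IH (rcons w x)) _.
rewrite rev_cons flatten_rcons -catA; apply: pe_cat; first exact: presEq_refl.
rewrite -cats1; exact: presEq_sym.
Qed.

Lemma zs_sub C : (forall w x, twist C w x ++ w ~ w ++ [:: x]) ->
  forall u w S, subseq S (zsA C w u) ->
  exists p, size p + size S = size u /\ w ++ u ~ flatten (rev S) ++ w ++ p.
Proof.
move=> H; elim => [|x u IH] w S /=.
  case: S => // _; exists [::]; split => //=.
  rewrite !cats0; exact: presEq_refl.
have unch : subseq S (zsA C (rcons w x) u) -> exists p, size p + size S = (size u).+1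
    /\ w ++ x :: u ~ flatten (rev S) ++ w ++ p.
  move=> /IH [p [sp hp]]; exists (x :: p); split; first by rewrite /= addSn sp.
  by rewrite -cat_rcons -[w ++ x :: p]cat_rcons.
case: S unch => [|y S] unch; first by move=> _; apply: unch; exact: sub0seq.
rewrite /=; case: eqP => [ey hs|_]; last exact: unch.
have [p [sp hp]] := IH _ _ hs.
exists p; split; first by rewrite /= addnS sp.
rewrite -cat_rcons; apply: presEq_trans hp _.
rewrite rev_cons flatten_rcons -!catA; apply: pe_cat; first exact: presEq_refl.
rewrite catA; apply: pe_cat; last exact: presEq_refl.
by rewrite ey -cats1; exact: presEq_sym.
Qed.

Lemma max_ratio : normalizing R -> cancellative R -> BF R ->
  (exists u v, u ~ v /\ v != [::]) ->
  exists u0 v0, u0 ~ v0 /\ v0 != [::] /\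
    forall u v, u ~ v -> v != [::] -> size u * size v0 <= size u0 * size v.
Proof.
move=> N Cn bf [u1 [v1 [h1 n1]]].
have [C HC] := letter_bound bf.
have Hex : forall w x, exists z, size z <= C /\ z ++ w ~ w ++ [:: x].
  move=> w x; have [z hz] := twist_ex N w x; exists z; split => //.
  exact: twist_bound N Cn bf C HC w x z hz.
have HT := twistP Hex.
pose inP (p : seq X * seq X) := p.1 ~ p.2 /\ p.2 != [::].
pose gt (q p : seq X * seq X) := size p.1 * size q.2 < size q.1 * size p.2.
pose sz (p : seq X * seq X) := size p.1 + size p.2.
apply: contrapT => Hno.
have Hb : forall p, inP p -> exists q, inP q /\ gt q p.
  move=> [u0 v0] [h0 n0]; apply: contrapT => Hk; apply: Hno; exists u0, v0.
  split => //; split => // u v huv nv; rewrite leqNgt; apply/negP => lt; apply: Hk.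
  by exists (u, v).
pose bet p := match pselect (exists q, inP q /\ gt q p /\
    forall q', inP q' -> gt q' p -> sz q <= sz q') with
  | left h => proj1_sig (cid h) | right _ => p end.
have betP : forall p, inP p -> inP (bet p) /\ gt (bet p) p /\
    forall q', inP q' -> gt q' p -> sz (bet p) <= sz q'.
  move=> p ip; rewrite /bet; case: pselect => [h|h]; first exact: proj2_sig (cid h).
  exfalso; apply: h.
  pose Pn := fun n => `[< exists q, inP q /\ gt q p /\ sz q = n >].
  have exn : exists n, Pn n.
    by case: (Hb p ip) => q [iq gq]; exists (sz q); apply/asboolP; exists q.
  case: (ex_minnP exn) => m /asboolP [q [iq [gq sq]]] mm.
  exists q; do 2 split => //; move=> q' iq' gq'; rewrite sq; apply: mm.
  by apply/asboolP; exists q'.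
pose pp n := iter n bet (u1, v1).
have ppP : forall n, inP (pp n).
  by elim => [|n IH]; [split | rewrite /pp iterS; exact: (betP _ IH).1].
have ppS : forall n, gt (pp n.+1) (pp n).
  by move=> n; rewrite /pp iterS; exact: (betP _ (ppP n)).2.1.
have pos : forall p, inP p -> 0 < size p.2 by move=> p [_]; rewrite lt0n size_eq0.
have gt_trans : forall a b c, inP a -> inP b -> inP c -> gt b a -> gt c b -> gt c a.
  move=> a b c /pos ha /pos hb /pos hc; rewrite /gt.
  move: (size a.1) (size a.2) (size b.1) (size b.2) (size c.1) (size c.2) ha hb hc.
  move=> a1 a2 b1 b2 c1 c2 ha hb hc h1' h2'; nia.
have ppM : forall i j, i < j -> gt (pp j) (pp i).
  move=> i; elim => // j IH; rewrite ltnS leq_eqVlt => /orP[/eqP->|ij].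
    exact: ppS.
  exact: gt_trans (ppP _) (ppP _) (ppP _) (IH ij) (ppS j).
pose f n := map (pair true) (zsA C [::] (pp n).1) ++ map (pair false) (zsA C [::] (pp n).2).
pose L2 := [seq (b, z) | b <- [:: true; false], z <- Lw X C].
have fL : forall n, all (mem L2) (f n).
  have sm : forall w x, size (twist C w x) <= C by move=> w x; exact: (HT w x).1.
  move=> n; rewrite all_cat !all_map; apply/andP; split.
    apply/allP => z /(allP (zsA_small [::] (pp n).1 sm)) zs /=.
    by apply: allpairs_f; rewrite ?inE ?eqxx ?Lw_mem.
  apply/allP => z /(allP (zsA_small [::] (pp n).2 sm)) zs /=.
  by apply: allpairs_f; rewrite ?inE ?eqxx ?orbT ?Lw_mem.
have [i [j [ij sij]]] := higman_gen fL.
have [s1 s2] := enc_sub sij.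
have HT2 : forall w x, twist C w x ++ w ~ w ++ [:: x] by move=> w x; exact: (HT w x).2.
case: (ppP i) (ppP j) => hi ni [hj nj].
move: (ppM i j ij) ni nj s1 s2 hi hj; rewrite /gt.
case: (pp i) => ui vi; case Ej: (pp j) => [uj vj] /= gij ni nj s1 s2 hi hj.
have [p [sp hp]] := zs_sub HT2 s1.
have [q [sq hq]] := zs_sub HT2 s2.
rewrite !size_zsA in sp sq.
have ei := zs_eq HT2 ui [::]; have evi := zs_eq HT2 vi [::].
rewrite cats0 /= in ei; rewrite cats0 /= in evi; rewrite /= in hp hq.
have hup : uj ~ ui ++ p.
  apply: presEq_trans hp _; exact: pe_cat (presEq_sym ei) (presEq_refl R p).
have hvq : vj ~ vi ++ q.
  apply: presEq_trans hq _; apply: pe_cat (presEq_sym evi) (presEq_refl R _).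
have hpq : p ~ q.
  apply: (Cn ui p q).1.
  apply: presEq_trans (presEq_sym hup) _; apply: presEq_trans hj _.
  apply: presEq_trans hvq _; apply: pe_cat (presEq_sym hi) (presEq_refl R _).
have [q0|qn] := eqVneq q [::].
  move: hpq; rewrite q0 => /(no_units bf) p0.
  move: sp sq; rewrite p0 q0 /= !add0n => sp sq.
  by move: gij; rewrite -sp -sq ltnn.
clear sij; case: j ij Ej gij hj nj hup hvq sp sq => // k ij Ej gij hj nj hup hvq sp sq.
have ipq : inP (p, q) by split.
have g1 : gt (p, q) (pp k.+1).
  rewrite /gt Ej /= -sp -sq.
  move: gij; rewrite -sp -sq.
  move: (size ui) (size vi) (size p) (size q) => a b c d h; nia.
have g2 : gt (p, q) (pp k) := gt_trans _ _ _ (ppP k) (ppP k.+1) ipq (ppS k) g1.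
have := (betP _ (ppP k)).2.2 _ ipq g2.
have E2 : bet (pp k) = (uj, vj) by rewrite -Ej.
rewrite E2 /sz /= -sp -sq.
have : 0 < size vi by rewrite lt0n size_eq0.
move: (size ui) (size vi) (size p) (size q) => a b c d h1' h2'; lia.
Qed.
End Mon.

Lemma frac_le (a b c d : nat) : (0 < b)%N -> (0 < d)%N -> (a * d <= c * b)%N ->
  (a%:R / b%:R <= c%:R / d%:R :> Rdefinitions.R)%R.
Proof.
move=> hb hd h.
rewrite ler_pdivrMr ?ltr0n // mulrAC ler_pdivlMr ?ltr0n // -!natrM ler_nat.
by [].
Qed.

Section Fin.
Variable X : finType.
Variable R : seq X -> seq X -> Prop.
Local Notation "a ~ b" := (presEq R a b) (at level 70).

Lemma rho_pos : BF R -> forall a,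
  (exists b, b ~ a /\ (0 < size b)%N) ->
  exists b1 b2, b1 ~ a /\ b2 ~ a /\ (0 < size b2)%N /\
    (forall b, b ~ a -> (0 < size b)%N -> size b <= size b1 /\ size b2 <= size b)%N /\
    rho (lengthSet R a) = ((size b1)%:R / (size b2)%:R)%:E.
Proof.
move=> bf a [b [ba pb]].
have [N HN] := bf_bound bf a.
pose P := fun n => `[< lengthSet R a n /\ (0 < n)%N >].
have exP : exists n, P n by exists (size b); apply/asboolP; split => //; exists b.
have ubP : forall n, P n -> (n <= N)%N.
  by move=> n /asboolP [[c [ca <-]] _]; exact: HN.
case: (ex_maxnP exP ubP) => n1 /asboolP [[b1 [b1a s1]] p1] m1.
case: (ex_minnP exP) => n2 /asboolP [[b2 [b2a s2]] p2] m2.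
exists b1, b2; split => //; split => //; split; first by rewrite s2.
split.
  move=> c ca pc; rewrite s1 s2; split.
    by apply: m1; apply/asboolP; split => //; exists c.
  by apply: m2; apply/asboolP; split => //; exists c.
rewrite /rho; case: pselect => [hh|h]; last first.
  by exfalso; apply: h; exists (size b); split => //; exists b.
set S := ([set ((n%:R)%R : Rdefinitions.R)%:E | n in [set n | lengthSet R a n /\ (0 < n)%N]])%classic.
have supE : ereal_sup S = (n1%:R)%:E.
  apply/eqP; rewrite eq_le; apply/andP; split.
    apply: ge_ereal_sup => y [m [hm pm] <-]; rewrite lee_fin ler_nat.
    by apply: m1; apply/asboolP.
  by apply: ereal_sup_ubound; exists n1 => //; split => //; exists b1.
have infE : ereal_inf S = (n2%:R)%:E.
  apply/eqP; rewrite eq_le; apply/andP; split.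
    by apply: ereal_inf_lbound; exists n2 => //; split => //; exists b2.
  apply: le_ereal_inf_tmp => y [m [hm pm] <-]; rewrite lee_fin ler_nat.
  by apply: m2; apply/asboolP.
by rewrite supE infE /= -EFinM s1 s2.
Qed.

Lemma rho_zero a : ~ (exists b, b ~ a /\ (0 < size b)%N) -> rho (lengthSet R a) = 0%E.
Proof.
move=> h; rewrite /rho; case: pselect => // hh; exfalso.
case: hh => n [[b [ba bn]] pb]; apply: h; exists b; by rewrite bn.
Qed.
End Fin.

Theorem proposition5p4 (X : finType) (R : seq X -> seq X -> Prop) :
  normalizing R -> cancellative R -> BF R -> accepted_elasticity R.
Proof.
move=> N Cn bf.
have [Hp|Hp] := pselect (exists u v, presEq R u v /\ v != [::]).
  have [u0 [v0 [h0 [n0 Hm]]]] := max_ratio N Cn bf Hp.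
  have pv0 : (0 < size v0)%N by rewrite lt0n size_eq0.
  pose K : Rdefinitions.R := ((size u0)%:R / (size v0)%:R)%R.
  have Hle : forall a, (rho (lengthSet R a) <= K%:E)%E.
    move=> a; have [hp|hp] := pselect (exists b, presEq R b a /\ (0 < size b)%N).
      have [b1 [b2 [h1 [h2 [p2 [_ ->]]]]]] := rho_pos bf hp.
      rewrite lee_fin; apply: frac_le => //.
      apply: Hm; first exact: presEq_trans h1 (presEq_sym h2).
      by rewrite -size_eq0 -lt0n.
    by rewrite rho_zero // lee_fin divr_ge0.
  have pu0 : exists b, presEq R b u0 /\ (0 < size b)%N.
    exists v0; split; [exact: presEq_sym | by []].
  have Hr : rho (lengthSet R u0) = K%:E.
    apply/eqP; rewrite eq_le Hle /=.
    have [b1 [b2 [h1 [h2 [p2 [Hmm ->]]]]]] := rho_pos bf pu0.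
    have pu : (0 < size u0)%N.
      rewrite lt0n size_eq0; apply/negP => /eqP u0e.
      by move: h0 n0; rewrite u0e => /presEq_sym /(no_units bf) ->.
    have [m1 _] := Hmm u0 (presEq_refl R _) pu.
    have [_ m2] := Hmm v0 (presEq_sym h0) pv0.
    rewrite lee_fin; apply: frac_le => //.
    exact: leq_mul.
  have He : elasticity R = K%:E.
    apply/eqP; rewrite eq_le; apply/andP; split.
      by apply: ge_ereal_sup => y [a _ <-]; exact: Hle.
    by rewrite -Hr; apply: ereal_sup_ubound; exists u0.
  exists u0; split; first by rewrite He Hr.
  by rewrite He ltry.
have H0 : forall a, rho (lengthSet R a) = 0%E.
  move=> a; apply: rho_zero => -[b [ba pb]]; apply: Hp; exists b, b; split.
    exact: presEq_refl.
  by rewrite -size_eq0 -lt0n.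
have He : elasticity R = 0%E.
  apply/eqP; rewrite eq_le; apply/andP; split.
    by apply: ge_ereal_sup => y [a _ <-]; rewrite H0.
  by rewrite -(H0 [::]); apply: ereal_sup_ubound; exists [::].
exists [::]; split; first by rewrite He H0.
by rewrite He ltry.
Qed.
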